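(* Let $\vec m\in\mathbb{R}^9$ with $m(9)=0$, $\sum_{i=1}^8 m(i)=0$ and $\sum_{i=1}^8 m(i)^2=1$, let $s\ge0$, and let $p\in\mathbb{R}^9$ be given by $p(i)=\frac18+s\,m(i)$ for $1\le i\le 8$ and $p(9)=0$. Let $\rho=\sum_{i=1}^9[4p(i)-\frac13]\Pi_i$. Then $\rho$ is a density operator if and only if either $s=0$, or $$s^2\le\frac1{24}\quad\text{and}\quad F(\vec m)=\frac{3}{16s}\bigl[2-\Phi(\vec m)\bigr],$$ where $\Phi(\vec m)=[m(1)+m(5)]^2+[m(2)+m(4)]^2+[m(3)+m(6)]^2+[m(7)+m(8)]^2$. Moreover $\rho$ is a pure state if and only if $s=\frac1{2\sqrt6}$ and $F(\vec m)=\frac{3\sqrt6}{8}\bigl[2-\Phi(\vec m)\bigr]$.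
   Context: Let $\omega=e^{2\pi i/3}$, standard basis $|0\rangle,|1\rangle,|2\rangle$ of $\mathbb{C}^3$, $X|j\rangle=|j+1\bmod 3\rangle$, $Z|j\rangle=\omega^j|j\rangle$, $|\psi_0\rangle=\frac1{\sqrt2}(0,1,-1)^T$; for $m,n\in\{0,1,2\}$ and $i=3m+n+1$, $\Pi_i$ is the projector onto $X^mZ^n|\psi_0\rangle$ (the canonical Hesse SIC), so $p(i)=\frac13\operatorname{Tr}(\rho\Pi_i)$. Identify index $i=3m+n+1$ with $(m,n)\in\mathbb{Z}_3^2$; the 12 affine lines are $\{1,2,3\},\{4,5,6\},\{7,8,9\},\{1,4,7\},\{2,5,8\},\{3,6,9\},\{1,5,9\},\{2,6,7\},\{3,4,8\},\{1,6,8\},\{2,4,9\},\{3,5,7\}$, and $Q$ is the set of ordered triples $(i,j,k)$ of pairwise distinct indices with $\{i,j,k\}$ a line. For $v\in\mathbb{R}^9$ define $F(v)=\sum_i v(i)^3-\frac12\sum_{(i,j,k)\in Q}v(i)v(j)v(k)$. *)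

(* Defs.v *)
(* Complex numbers: an arbitrary numClosedFieldType C
   (e.g. algC); the real numbers are its real elements. *)
From HB Require Import structures.
From mathcomp Require Import all_boot all_order all_algebra.
Set Implicit Arguments. Unset Strict Implicit. Unset Printing Implicit Defensive.
Import Order.TTheory GRing.Theory Num.Theory.
Local Open Scope ring_scope.

Section Hesse.
Variable C : numClosedFieldType.

(* omega = e^{2 pi i/3} = (-1 + i sqrt 3)/2 *)
Definition omega : C := (-1 + 'i * sqrtC 3) / 2%:R.

Definition Xmx : 'M[C]_3 := \matrix_(a < 3, b < 3) ((a : nat) == (b.+1 %% 3)%N)%:R.
Definition Zmx : 'M[C]_3 := \matrix_(a < 3, b < 3) (((a : nat) == b)%:R * omega ^+ a).

Definition psi0 : 'cV[C]_3 :=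
  (sqrtC 2%:R)^-1 *: \col_(a < 3) (if (a : nat) == 1%N then 1 else if (a : nat) == 2%N then -1 else 0).

Definition adjoint m n (A : 'M[C]_(m, n)) : 'M[C]_(n, m) := (map_mx (fun x => x^*) A)^T.

(* SIC vector with 0-based index k = i-1 = 3 m + n *)
Definition sic_vec (k : 'I_9) : 'cV[C]_3 := (Xmx ^+ (k %/ 3)%N) *m (Zmx ^+ (k %% 3)%N) *m psi0.
Definition Pi (k : 'I_9) : 'M[C]_3 := sic_vec k *m adjoint (sic_vec k).

Definition density (rho : 'M[C]_3) : Prop :=
  [/\ adjoint rho = rho,
      forall v : 'cV[C]_3, 0 <= (adjoint v *m rho *m v) 0 0
    & \tr rho = 1].

Definition pure_state (rho : 'M[C]_3) : Prop := density rho /\ rho *m rho = rho.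

(* the 12 affine lines, 1-based indices as in the paper *)
Definition lines : seq (seq nat) :=
  [:: [:: 1;2;3]; [:: 4;5;6]; [:: 7;8;9]; [:: 1;4;7]; [:: 2;5;8]; [:: 3;6;9];
      [:: 1;5;9]; [:: 2;6;7]; [:: 3;4;8]; [:: 1;6;8]; [:: 2;4;9]; [:: 3;5;7]].

(* Q: ordered triples (0-based ordinals) of pairwise distinct indices forming a line *)
Definition inQ (t : 'I_9 * 'I_9 * 'I_9) : bool :=
  let: (i, j, k) := t in
  [&& i != j, j != k, i != k &
      has (fun L => perm_eq L [:: i.+1; j.+1; k.+1]%N) lines].

(* entry with 1-based index *)
Definition at1 (v : 'I_9 -> C) (i : nat) : C := v (inord i.-1).

Definition F (v : 'I_9 -> C) : C :=
  \sum_(i < 9) v i ^+ 3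
  - 2%:R^-1 * \sum_(t : 'I_9 * 'I_9 * 'I_9 | inQ t) v t.1.1 * v t.1.2 * v t.2.

Definition Phi (m : 'I_9 -> C) : C :=
  (at1 m 1 + at1 m 5) ^+ 2 + (at1 m 2 + at1 m 4) ^+ 2
  + (at1 m 3 + at1 m 6) ^+ 2 + (at1 m 7 + at1 m 8) ^+ 2.

Definition pvec (s : C) (m : 'I_9 -> C) (k : 'I_9) : C :=
  if (k < 8)%N then 8%:R^-1 + s * m k else 0.

Definition rho_of (p : 'I_9 -> C) : 'M[C]_3 :=
  \sum_(k < 9) (4%:R * p k - 3%:R^-1) *: Pi k.

End Hesse.

(* Main.v *)
Require Import Defs.
From HB Require Import structures.
From mathcomp Require Import all_boot all_order all_algebra ring sesquilinear spectral.
Import Order.TTheory GRing.Theory Num.Theory.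
Local Open Scope ring_scope.

Section S.
Variable C : numClosedFieldType.
Local Notation w := (omega C).

Lemma sum3 (f : 'I_3 -> C) : \sum_(i < 3) f i = f (@Ordinal 3 0 isT) + f (@Ordinal 3 1 isT) + f (@Ordinal 3 2 isT).
Proof.
rewrite !big_ord_recr big_ord0 /= add0r.
by congr (f _ + f _ + f _); apply: val_inj.
Qed.

Lemma w2 : w ^+ 2 = -1 - w.
Proof.
rewrite /omega.
have hi : 'i * 'i = -1 :> C by rewrite -expr2 sqrCi.
have hq : sqrtC 3%:R * sqrtC 3%:R = 3%:R :> C by rewrite -expr2 sqrtCK.
by field: hi hq.
Qed.

Lemma wc : w^* = w ^+ 2.
Proof.
rewrite w2 /omega.
have h3 : (sqrtC 3%:R : C)^* = sqrtC 3%:R by rewrite conj_Creal // ger0_real // sqrtC_ge0 ler0n.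
have h2 : (2%:R : C)^* = 2%:R by rewrite conj_Creal // ger0_real // ler0n.
rewrite fmorph_div rmorphD rmorphN rmorph1 rmorphM /= conjCi h3 h2.
by field.
Qed.

Lemma rc : ((sqrtC 2%:R)^-1 : C)^* = (sqrtC 2%:R)^-1.
Proof. by rewrite conj_Creal // ger0_real // invr_ge0 sqrtC_ge0 ler0n. Qed.

Lemma hr : ((sqrtC 2%:R)^-1 : C) * (sqrtC 2%:R)^-1 = 2%:R^-1.
Proof. by rewrite -invfM -expr2 sqrtCK. Qed.

Definition ab (k : nat) : nat * nat :=
  match k with 0 => (0,0) | 1 => (0,1) | 2 => (0,2) | 3 => (1,0) | 4 => (1,1)
  | 5 => (1,2) | 6 => (2,0) | 7 => (2,1) | _ => (2,2) end%N.
Definition nxt (a : nat) : nat := match a with 0 => 1 | 1 => 2 | _ => 0 end%N.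
Definition nxt2 (a : nat) : nat := match a with 0 => 2 | 1 => 0 | _ => 1 end%N.

Definition Ev (k i : nat) : C :=
  let: (a, b) := ab k in
  if i == nxt a then w ^+ b else if i == nxt2 a then - w ^+ (2 * b) else 0.
Definition Evb (k i : nat) : C :=
  let: (a, b) := ab k in
  if i == nxt a then w ^+ (2 * b) else if i == nxt2 a then - w ^+ (4 * b) else 0.

Lemma wXc n : (w ^+ n)^* = w ^+ (2 * n).
Proof. by rewrite rmorphXn /= wc -exprM. Qed.

Lemma Evc k i : (Ev k i)^* = Evb k i.
Proof.
rewrite /Ev /Evb; case: (ab k) => a b.
case: ifP => _; first by rewrite wXc.
case: ifP => _; last by rewrite rmorph0.
by rewrite rmorphN /= wXc mulnA.
Qed.

Lemma sicE (k : 'I_9) (i : 'I_3) : sic_vec C k i 0 = (sqrtC 2%:R)^-1 * Ev k i.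
Proof.
case: k => [[|[|[|[|[|[|[|[|[|//]]]]]]]]] Hk];
case: i => [[|[|[|//]]] Hi];
rewrite /sic_vec /psi0 /Ev /= ?mulmxE ?expr0 ?expr1 ?expr2 ?mul1r -?mulmxE !(mxE, sum3) /=;
ring: w2.
Qed.

Lemma sum9 (f : 'I_9 -> C) : \sum_(i < 9) f i =
  f (@Ordinal 9 0 isT) + f (@Ordinal 9 1 isT) + f (@Ordinal 9 2 isT) +
  f (@Ordinal 9 3 isT) + f (@Ordinal 9 4 isT) + f (@Ordinal 9 5 isT) +
  f (@Ordinal 9 6 isT) + f (@Ordinal 9 7 isT) + f (@Ordinal 9 8 isT).
Proof.
rewrite !big_ord_recr big_ord0 /= add0r.
by congr (f _ + f _ + f _ + f _ + f _ + f _ + f _ + f _ + f _); apply: val_inj.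
Qed.

Lemma rrE (a b : C) : (sqrtC 2%:R)^-1 * a * ((sqrtC 2%:R)^-1 * b) = 2%:R^-1 * (a * b).
Proof. by rewrite mulrACA hr mulrC. Qed.

Local Notation x m n := (m (@Ordinal 9 n isT)).

Definition Rent (s : C) (m : 'I_9 -> C) (i j : nat) : C :=
  match i, j with
  | 0, 0 => 4%:R^-1 + 2%:R * s * (x m 3 + x m 4 + x m 5 + x m 6 + x m 7)
  | 1, 1 => 4%:R^-1 + 2%:R * s * (x m 0 + x m 1 + x m 2 + x m 6 + x m 7)
  | 2, 2 => 2%:R^-1 + 2%:R * s * (x m 0 + x m 1 + x m 2 + x m 3 + x m 4 + x m 5)
  | 1, 2 => 2%:R * s * (x m 1 - x m 0) + w * (2%:R * s * (x m 1 - x m 2))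
  | 2, 1 => 2%:R * s * (x m 2 - x m 0) + w * (2%:R * s * (x m 2 - x m 1))
  | 2, 0 => 2%:R * s * (x m 4 - x m 3) + w * (2%:R * s * (x m 4 - x m 5))
  | 0, 2 => 2%:R * s * (x m 5 - x m 3) + w * (2%:R * s * (x m 5 - x m 4))
  | 0, 1 => 2%:R * s * (x m 7 - x m 6) + w * (4%:R^-1 + 2%:R * s * x m 7)
  | 1, 0 => - (4%:R^-1 + 2%:R * s * x m 6) - w * (4%:R^-1 + 2%:R * s * x m 7)
  | _, _ => 0
  end.

Definition Rmx s m : 'M[C]_3 := \matrix_(i < 3, j < 3) Rent s m i j.

Lemma PiE (k : 'I_9) (i j : 'I_3) : Pi C k i j = sic_vec C k i 0 * (sic_vec C k j 0)^*.
Proof. by rewrite /Pi; move: (sic_vec C k) => v; rewrite /adjoint !mxE big_ord1 !mxE. Qed.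

Lemma mxZE (a : C) (A : 'M[C]_3) i j : (a *: A) i j = a * A i j.
Proof. by rewrite mxE. Qed.

Lemma rhoE s m : rho_of (pvec s m) = Rmx s m.
Proof.
apply/matrixP => i j.
rewrite /rho_of summxE sum9 !mxZE !PiE !sicE /pvec /Rmx !mxE /=.
rewrite !rmorphM /= rc !Evc.
rewrite !rrE.
case: i => [[|[|[|//]]] Hi]; case: j => [[|[|[|//]]] Hj];
rewrite /Ev /Evb /Rent /=; field: w2; done.
Qed.
End S.


Section S2.
Variable C : numClosedFieldType.
Local Notation w := (omega C).
Local Notation x m n := (m (@Ordinal 9 n isT)).
Variables (s : C) (m : 'I_9 -> C).
Hypothesis h7 : x m 7 = - (x m 0 + x m 1 + x m 2 + x m 3 + x m 4 + x m 5 + x m 6).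

Lemma trR : \tr (Rmx C s m) = 1.
Proof.
rewrite /mxtrace sum3 /Rmx !mxE /Rent /= h7.
by field.
Qed.

Lemma trR2 : \tr (Rmx C s m *m Rmx C s m) = 2%:R^-1 + 12%:R * s ^+ 2 *
  (x m 0 ^+ 2 + x m 1 ^+ 2 + x m 2 ^+ 2 + x m 3 ^+ 2 + x m 4 ^+ 2 + x m 5 ^+ 2 + x m 6 ^+ 2 + x m 7 ^+ 2).
Proof.
rewrite /mxtrace sum3 /Rmx !mxE !sum3 !mxE /Rent /= h7.
by field: (w2 C).
Qed.

Definition Np := x m 0 ^+ 2 + x m 1 ^+ 2 + x m 2 ^+ 2 + x m 3 ^+ 2 + x m 4 ^+ 2 + x m 5 ^+ 2 + x m 6 ^+ 2 + x m 7 ^+ 2.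
Definition L8 := x m 0 * x m 1 * x m 2 + x m 3 * x m 4 * x m 5 + x m 0 * x m 3 * x m 6 + x m 1 * x m 4 * x m 7
  + x m 1 * x m 5 * x m 6 + x m 2 * x m 3 * x m 7 + x m 0 * x m 5 * x m 7 + x m 2 * x m 4 * x m 6.
Definition Fp := x m 0 ^+ 3 + x m 1 ^+ 3 + x m 2 ^+ 3 + x m 3 ^+ 3 + x m 4 ^+ 3 + x m 5 ^+ 3 + x m 6 ^+ 3 + x m 7 ^+ 3
  - 3%:R * L8.
Definition Phip := (x m 0 + x m 4) ^+ 2 + (x m 1 + x m 3) ^+ 2 + (x m 2 + x m 5) ^+ 2 + (x m 6 + x m 7) ^+ 2.
Definition E3 := - (3%:R / 2%:R) * s ^+ 2 * (2%:R * Np - Phip) + 8%:R * s ^+ 3 * Fp.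

Lemma trR3 : \tr (Rmx C s m *m Rmx C s m *m Rmx C s m) =
  (6%:R * E3 - 1 + 3%:R * (2%:R^-1 + 12%:R * s ^+ 2 * Np)) / 2%:R.
Proof.
rewrite /E3 /Np /Fp /L8 /Phip /mxtrace sum3 /Rmx !mxE !sum3 !mxE !sum3 !mxE /Rent /= h7.
by field: (w2 C).
Qed.

Hypothesis hreal : forall i, m i \is Num.real.
Hypothesis hsr : s \is Num.real.

Definition gv : 'cV[C]_3 := \col_(i < 3) (if (i : nat) == 0%N then 1 else if (i : nat) == 1%N then - w ^+ 2 else 0).

Lemma gform : (adjoint gv *m Rmx C s m *m gv) 0 0 = 0.
Proof.
rewrite /adjoint /gv /Rmx !mxE !sum3 !mxE !sum3 !mxE /Rent /= h7.
have cN2 : (- w ^+ 2)^* = - w.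
  by rewrite rmorphN /= (wXc C); ring: (w2 C).
rewrite ?rmorph0 ?rmorph1 ?cN2.
by field: (w2 C).
Qed.

Lemma gv_neq0 : gv != 0.
Proof.
apply/negP => /eqP/matrixP/(_ 0 0); rewrite /gv !mxE /= => /eqP.
by rewrite oner_eq0.
Qed.
End S2.


Section S3.
Variable C : numClosedFieldType.

Lemma adjointM m n p (A : 'M[C]_(m, n)) (B : 'M[C]_(n, p)) :
  adjoint (A *m B) = adjoint B *m adjoint A.
Proof. by rewrite /adjoint map_mxM trmx_mul. Qed.

Lemma adjointK m n (A : 'M[C]_(m, n)) : adjoint (adjoint A) = A.
Proof.
by apply/matrixP => i j; rewrite /adjoint !mxE conjCK.
Qed.

Lemma spec3 (A : 'M[C]_3) : adjoint A = A -> exists (P : 'M[C]_3) (d : 'rV[C]_3),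
  [/\ P *m adjoint P = 1%:M, adjoint P *m P = 1%:M, A = adjoint P *m diag_mx d *m P
    & forall i, d 0 i \is Num.real].
Proof.
move=> hA.
have herm : A \is hermsymmx.
  apply/is_hermitianmxP; rewrite expr0 scale1r -map_trmx.
  by rewrite -[LHS]hA.
have Aeq := orthomx_spectralP (hermitian_normalmx herm).
have Pu := spectral_unitarymx A.
have adjE : adjoint (spectralmx A) = invmx (spectralmx A).
  by rewrite invmx_unitary // /adjoint map_trmx.
exists (spectralmx A), (spectral_diag A); split.
- by rewrite adjE mulmxV // spectral_unit.
- by rewrite adjE mulVmx // spectral_unit.
- by rewrite adjE {1}Aeq.
- move=> i; have /mxOverP := hermitian_spectral_diag_real herm.
  by apply.
Qed.

Lemma form_diag (u : 'cV[C]_3) (d : 'rV[C]_3) :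
  (adjoint u *m diag_mx d *m u) 0 0 = \sum_i d 0 i * (u i 0 * (u i 0)^*).
Proof.
rewrite mul_mx_diag !mxE; apply: eq_bigr => i _; rewrite /adjoint ?mxE.
by ring.
Qed.

Variables (A P : 'M[C]_3) (d : 'rV[C]_3).
Hypotheses (hPP : P *m adjoint P = 1%:M) (hPP' : adjoint P *m P = 1%:M)
  (hA : A = adjoint P *m diag_mx d *m P) (hd : forall i, d 0 i \is Num.real).

Lemma formA (v : 'cV[C]_3) : (adjoint v *m A *m v) 0 0 = \sum_i d 0 i * ((P *m v) i 0 * ((P *m v) i 0)^*).
Proof.
by rewrite -form_diag adjointM hA !mulmxA.
Qed.

Lemma psdE : (forall v : 'cV[C]_3, 0 <= (adjoint v *m A *m v) 0 0) <-> (forall i, 0 <= d 0 i).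
Proof.
split.
- move=> H i; have := H (adjoint P *m delta_mx i 0).
  rewrite formA mulmxA hPP mul1mx.
  rewrite (bigD1 i) //= big1 ?addr0.
    by rewrite !mxE !eqxx /= conjC1 !mulr1.
  by move=> j hj; rewrite !mxE (negbTE hj) /= conjC0 !mulr0.
- move=> H v; rewrite formA; apply: sumr_ge0 => i _.
  by apply: mulr_ge0 => //; apply: mul_conjC_ge0.
Qed.

Lemma trA : \tr A = \sum_i d 0 i.
Proof. by rewrite hA mxtrace_mulC mulmxA hPP mul1mx mxtrace_diag. Qed.

Lemma conjmul (X Y : 'M[C]_3) :
  (adjoint P *m X *m P) *m (adjoint P *m Y *m P) = adjoint P *m (X *m Y) *m P.
Proof. by rewrite !mulmxA -(mulmxA _ P (adjoint P)) hPP mulmx1. Qed.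

Lemma trconj (X : 'M[C]_3) : \tr (adjoint P *m X *m P) = \tr X.
Proof. by rewrite mxtrace_mulC mulmxA hPP mul1mx. Qed.

Lemma A2 : A *m A = adjoint P *m diag_mx (\row_j (d 0 j * d 0 j)) *m P.
Proof. by rewrite hA conjmul mulmx_diag. Qed.

Lemma trA2 : \tr (A *m A) = \sum_i d 0 i ^+ 2.
Proof.
rewrite A2 trconj mxtrace_diag.
by apply: eq_bigr => i _; rewrite mxE expr2.
Qed.

Lemma trA3 : \tr (A *m A *m A) = \sum_i d 0 i ^+ 3.
Proof.
rewrite A2 hA conjmul trconj mulmx_diag mxtrace_diag.
by apply: eq_bigr => i _; rewrite !mxE; ring.
Qed.

Lemma uncon (X : 'M[C]_3) : P *m (adjoint P *m X *m P) *m adjoint P = X.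
Proof. by rewrite !mulmxA hPP mul1mx -mulmxA hPP mulmx1. Qed.

Lemma projE : A *m A = A <-> (forall i, d 0 i ^+ 2 = d 0 i).
Proof.
rewrite A2 hA; split.
- move=> H i.
  have := congr1 (fun M => P *m M *m adjoint P) H.
  rewrite /= !uncon => /matrixP/(_ i i).
  by rewrite !mxE eqxx /= !mulr1n expr2.
- move=> H; congr (_ *m _ *m _); apply/matrixP => i j; rewrite !mxE.
  by rewrite -expr2 H.
Qed.

Lemma kerE (g : 'cV[C]_3) : g != 0 -> (adjoint g *m A *m g) 0 0 = 0 ->
  (forall i, 0 <= d 0 i) -> d 0 (@Ordinal 3 0 isT) * d 0 (@Ordinal 3 1 isT) * d 0 (@Ordinal 3 2 isT) = 0.
Proof.
move=> gn0 hg hpos.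
rewrite formA sum3 in hg.
set t := fun i => d 0 i * ((P *m g) i 0 * ((P *m g) i 0)^*).
have tge : forall i, 0 <= t i by move=> i; apply: mulr_ge0 => //; apply: mul_conjC_ge0.
have : t (@Ordinal 3 0 isT) + t (@Ordinal 3 1 isT) + t (@Ordinal 3 2 isT) == 0 by apply/eqP.
rewrite paddr_eq0 ?addr_ge0 // paddr_eq0 // => /andP[/andP[/eqP t0 /eqP t1] /eqP t2].
have key : forall i, t i = 0 -> d 0 i = 0 \/ (P *m g) i 0 = 0.
  move=> i /eqP; rewrite /t mulf_eq0 mul_conjC_eq0 => /orP[/eqP|/eqP]; by [left|right].
case: (key _ t0) => [->|u0]; first by rewrite !mul0r.
case: (key _ t1) => [->|u1]; first by rewrite mulr0 mul0r.
case: (key _ t2) => [->|u2]; first by rewrite mulr0.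
exfalso; move/negP: gn0; apply.
have : P *m g = 0.
  apply/matrixP => i j; rewrite ord1 [RHS]mxE; case: i => [[|[|[|//]]] Hi].
  - by have -> : Ordinal Hi = @Ordinal 3 0 isT by apply: val_inj.
  - by have -> : Ordinal Hi = @Ordinal 3 1 isT by apply: val_inj.
  - by have -> : Ordinal Hi = @Ordinal 3 2 isT by apply: val_inj.
move=> /(congr1 (mulmx (adjoint P))); rewrite mulmxA hPP' mul1mx mulmx0 => ->.
by [].
Qed.
End S3.


Section S4.
Variable C : numClosedFieldType.

Lemma sq_ge0 (a : C) : a \is Num.real -> 0 <= a * a.
Proof. by move=> ha; rewrite -{2}(conj_Creal ha) mul_conjC_ge0. Qed.

Lemma Rpair (a b : C) : a \is Num.real -> a + b = 1 -> 0 <= a * b -> 0 <= a.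
Proof.
move=> ha hab h.
have -> : a = a * a + a * b by rewrite -mulrDr hab mulr1.
by apply: addr_ge0 => //; apply: sq_ge0.
Qed.

Lemma R2 (a b c : C) : a \is Num.real -> b \is Num.real -> c \is Num.real ->
  a + b + c = 1 -> 0 <= a * b + a * c + b * c -> a * b * c = 0 ->
  [/\ 0 <= a, 0 <= b & 0 <= c].
Proof.
move=> ha hb hc hs he2 /eqP; rewrite !mulf_eq0 => /orP[/orP[]|] /eqP h0; subst.
- have e1 : b + c = 1 by rewrite -hs; ring.
  have e2 : 0 <= b * c by move: he2; rewrite !mul0r !add0r.
  split => //; first by apply: (Rpair _ _ hb e1 e2).
  by apply: (Rpair _ _ hc (_ : c + b = 1)); [rewrite addrC | rewrite mulrC].
- have e1 : a + c = 1 by rewrite -hs; ring.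
  have e2 : 0 <= a * c by move: he2; rewrite !mulr0 !mul0r add0r addr0.
  split => //; first by apply: (Rpair _ _ ha e1 e2).
  by apply: (Rpair _ _ hc (_ : c + a = 1)); [rewrite addrC | rewrite mulrC].
- have e1 : a + b = 1 by rewrite -hs; ring.
  have e2 : 0 <= a * b by move: he2; rewrite !mulr0 !addr0.
  split => //; first by apply: (Rpair _ _ ha e1 e2).
  by apply: (Rpair _ _ hb (_ : b + a = 1)); [rewrite addrC | rewrite mulrC].
Qed.

Lemma sqE (u v : C) : u + v = 1 -> u * v = 0 -> u ^+ 2 = u.
Proof.
move=> e1 e2; have -> : u ^+ 2 = u * (u + v) - u * v by ring.
by rewrite e1 e2; ring.
Qed.

Lemma R3 (a b c : C) : a + b + c = 1 -> a * b + a * c + b * c = 0 -> a * b * c = 0 ->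
  [/\ a ^+ 2 = a, b ^+ 2 = b & c ^+ 2 = c].
Proof.
move=> hs he2 /eqP; rewrite !mulf_eq0 => /orP[/orP[]|] /eqP h0; subst.
- have e2 : b * c = 0 by move: he2; rewrite !mul0r !add0r.
  have e1 : b + c = 1 by rewrite -hs; ring.
  split; first by rewrite expr2 mulr0.
    exact: (sqE _ _ e1 e2).
  by apply: (sqE c b); [rewrite addrC | rewrite mulrC].
- have e2 : a * c = 0 by move: he2; rewrite !mulr0 !mul0r add0r addr0.
  have e1 : a + c = 1 by rewrite -hs; ring.
  split; last by apply: (sqE c a); [rewrite addrC | rewrite mulrC].
    exact: (sqE _ _ e1 e2).
  by rewrite expr2 mulr0.
- have e2 : a * b = 0 by move: he2; rewrite !mulr0 !addr0.
  have e1 : a + b = 1 by rewrite -hs; ring.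
  split; last by rewrite expr2 mulr0.
    exact: (sqE _ _ e1 e2).
  by apply: (sqE b a); [rewrite addrC | rewrite mulrC].
Qed.

Lemma forall3 (P : 'I_3 -> Prop) :
  (forall i, P i) <-> [/\ P (@Ordinal 3 0 isT), P (@Ordinal 3 1 isT) & P (@Ordinal 3 2 isT)].
Proof.
split; first by move=> H; split; apply: H.
case=> h0 h1 h2 [[|[|[|//]]] Hi].
- by have -> : Ordinal Hi = @Ordinal 3 0 isT by apply: val_inj.
- by have -> : Ordinal Hi = @Ordinal 3 1 isT by apply: val_inj.
- by have -> : Ordinal Hi = @Ordinal 3 2 isT by apply: val_inj.
Qed.

Lemma rho_herm (p : 'I_9 -> C) : (forall k, p k \is Num.real) ->
  adjoint (rho_of p) = rho_of p.
Proof.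
move=> hp; apply/matrixP => i j.
rewrite /adjoint !mxE /rho_of !summxE rmorph_sum; apply: eq_bigr => k _.
rewrite !mxZE !PiE rmorphM [X in _ * X]rmorphM /= conjCK [X in X * _]conj_Creal; last first.
  by rewrite rpredB ?rpredM ?rpred_nat ?hp // rpredV rpred_nat.
by rewrite [X in _ * X]mulrC.
Qed.

Lemma pvec_real (s : C) (m : 'I_9 -> C) : s \is Num.real -> (forall i, m i \is Num.real) ->
  forall k, pvec s m k \is Num.real.
Proof.
move=> hs hm k; rewrite /pvec; case: ifP => _; last by rewrite rpred0.
by rewrite rpredD ?rpredM ?hm // rpredV rpred_nat.
Qed.
End S4.


Section S5.
Variable C : numClosedFieldType.
Local Notation x m n := (m (@Ordinal 9 n isT)).

Definition inQn (a b c : nat) : bool :=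
  [&& a != b, b != c, a != c &
      has (fun L => perm_eq L [:: a.+1; b.+1; c.+1]%N) lines].

Lemma inQE (i j k : 'I_9) : inQ (i, j, k) = inQn i j k.
Proof. by []. Qed.

Lemma sumQ (m : 'I_9 -> C) :
  \sum_(t : 'I_9 * 'I_9 * 'I_9 | inQ t) m t.1.1 * m t.1.2 * m t.2 =
  \sum_(0 <= a < 9) \sum_(0 <= b < 9) \sum_(0 <= c < 9) (inQn a b c)%:R * (m (inord a) * m (inord b) * m (inord c)).
Proof.
rewrite [RHS](big_mkord xpredT).
under [RHS]eq_bigr => a _ do (rewrite (big_mkord xpredT); under eq_bigr => b _ do rewrite (big_mkord xpredT)).
rewrite big_mkcond.
transitivity (\sum_(p : 'I_9 * 'I_9) \sum_(k < 9) (if inQ (p, k) then m p.1 * m p.2 * m k else 0)).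
  by rewrite pair_big; apply: eq_bigr => -[p k].
rewrite [RHS]pair_big /=; apply: eq_bigr => -[i j] _; apply: eq_bigr => k _.
rewrite /= !inord_val; case: ifP => h.
  have -> : inQn i j k = true by exact: h.
  by rewrite mul1r.
have -> : inQn i j k = false by exact: h.
by rewrite mul0r.
Qed.

Definition L72 : seq (nat * nat * nat) := [:: (0,1,2); (0,2,1); (0,3,6); (0,4,8); (0,5,7); (0,6,3); (0,7,5); (0,8,4); (1,0,2); (1,2,0); (1,3,8); (1,4,7); (1,5,6); (1,6,5); (1,7,4); (1,8,3); (2,0,1); (2,1,0); (2,3,7); (2,4,6); (2,5,8); (2,6,4); (2,7,3); (2,8,5); (3,0,6); (3,1,8); (3,2,7); (3,4,5); (3,5,4); (3,6,0); (3,7,2); (3,8,1); (4,0,8); (4,1,7); (4,2,6); (4,3,5); (4,5,3); (4,6,2); (4,7,1); (4,8,0); (5,0,7); (5,1,6); (5,2,8); (5,3,4); (5,4,3); (5,6,1); (5,7,0); (5,8,2); (6,0,3); (6,1,5); (6,2,4); (6,3,0); (6,4,2); (6,5,1); (6,7,8); (6,8,7); (7,0,5); (7,1,4); (7,2,3); (7,3,2); (7,4,1); (7,5,0); (7,6,8); (7,8,6); (8,0,4); (8,1,3); (8,2,5); (8,3,1); (8,4,0); (8,5,2); (8,6,7); (8,7,6)].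

Lemma sumQ3 (G : nat -> nat -> nat -> C) :
  \sum_(0 <= a < 9) \sum_(0 <= b < 9) \sum_(0 <= c < 9) (inQn a b c)%:R * G a b c =
  \sum_(x <- L72) G x.1.1 x.1.2 x.2.
Proof.
have -> : L72 = [seq x <- allpairs pair (allpairs pair (iota 0 9) (iota 0 9)) (iota 0 9) | inQn x.1.1 x.1.2 x.2] by vm_compute.
symmetry; rewrite big_filter big_mkcond big_allpairs big_allpairs /=.
apply: eq_bigr => a _; apply: eq_bigr => b _; apply: eq_bigr => c _.
by case: inQn; rewrite ?mul1r ?mul0r.
Qed.

Lemma inordO n (H : (n < 9)%N) : inord n = Ordinal H :> 'I_9.
Proof. by apply: val_inj; rewrite /= inordK. Qed.

Ltac norm_inord := rewrite ?(inordO 0 isT) ?(inordO 1 isT) ?(inordO 2 isT) ?(inordO 3 isT)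
  ?(inordO 4 isT) ?(inordO 5 isT) ?(inordO 6 isT) ?(inordO 7 isT) ?(inordO 8 isT).

Lemma FE (m : 'I_9 -> C) : x m 8 = 0 -> F m = Fp C m.
Proof.
move=> h8.
rewrite /F sumQ sumQ3 sum9 /L72 !big_cons big_nil /=.
norm_inord; rewrite h8 /Fp /L8; field; done.
Qed.

Lemma PhiE (m : 'I_9 -> C) : Phi m = Phip C m.
Proof. by rewrite /Phi /at1 /=; norm_inord. Qed.
End S5.


Theorem mainTheorem10 (C : numClosedFieldType) (m : 'I_9 -> C) (s : C)
  (hreal : forall i, m i \is Num.real)
  (h9 : m ord_max = 0)
  (hsum : \sum_(i < 9 | (i < 8)%N) m i = 0)
  (hnorm : \sum_(i < 9 | (i < 8)%N) m i ^+ 2 = 1)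
  (hs : 0 <= s) :
  (density (rho_of (pvec s m)) <->
     (s = 0 \/
      (s ^+ 2 <= 24%:R^-1 /\ F m = 3%:R / (16%:R * s) * (2%:R - Phi m))))
  /\
  (pure_state (rho_of (pvec s m)) <->
     (s = (2%:R * sqrtC 6%:R)^-1 /\ F m = 3%:R * sqrtC 6%:R / 8%:R * (2%:R - Phi m))).
Proof.
pose x n (H : (n < 9)%N) := m (Ordinal H).
have hx8 : m (@Ordinal 9 8 isT) = 0 by rewrite -h9; congr m; apply: val_inj.
have hs' : m (@Ordinal 9 0 isT) + m (@Ordinal 9 1 isT) + m (@Ordinal 9 2 isT) + m (@Ordinal 9 3 isT)
    + m (@Ordinal 9 4 isT) + m (@Ordinal 9 5 isT) + m (@Ordinal 9 6 isT) + m (@Ordinal 9 7 isT) = 0.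
  by move: hsum; rewrite big_mkcond sum9 /= addr0.
have h7 : m (@Ordinal 9 7 isT) = - (m (@Ordinal 9 0 isT) + m (@Ordinal 9 1 isT) + m (@Ordinal 9 2 isT)
    + m (@Ordinal 9 3 isT) + m (@Ordinal 9 4 isT) + m (@Ordinal 9 5 isT) + m (@Ordinal 9 6 isT)).
  by rewrite -[LHS]subr0 -hs'; ring.
have hN : Np C m = 1 by move: hnorm; rewrite big_mkcond sum9 /= addr0.
have hsr : s \is Num.real by apply: ger0_real.
rewrite FE // PhiE /density /pure_state rhoE.
set R := Rmx C s m.
have adj : adjoint R = R by rewrite /R -rhoE rho_herm //; apply: pvec_real.
have tr1 : \tr R = 1 := trR C s m h7.
have [P [d [hPP hPP' hA hd]]] := @spec3 C R adj.
set d0 := d 0 (@Ordinal 3 0 isT); set d1 := d 0 (@Ordinal 3 1 isT); set d2 := d 0 (@Ordinal 3 2 isT).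
have p1 : d0 + d1 + d2 = 1 by rewrite -tr1 (@trA C R P d hPP hA) sum3.
have p2 : d0 ^+ 2 + d1 ^+ 2 + d2 ^+ 2 = 2%:R^-1 + 12%:R * s ^+ 2.
  have := @trA2 C R P d hPP hA; rewrite sum3 (@trR2 C s m h7) => <-.
  by move: hN; rewrite /Np => ->; rewrite mulr1.
have p3 : d0 ^+ 3 + d1 ^+ 3 + d2 ^+ 3 = (6%:R * E3 C s m - 1 + 3%:R * (2%:R^-1 + 12%:R * s ^+ 2)) / 2%:R.
  by have := @trA3 C R P d hPP hA; rewrite sum3 (@trR3 C s m h7) hN mulr1 => <-.
have e2 : d0 * d1 + d0 * d2 + d1 * d2 = 4%:R^-1 - 6%:R * s ^+ 2.
  have -> : d0 * d1 + d0 * d2 + d1 * d2 = ((d0 + d1 + d2) ^+ 2 - (d0 ^+ 2 + d1 ^+ 2 + d2 ^+ 2)) / 2%:R by field.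
  by rewrite p1 p2; field.
have e3 : d0 * d1 * d2 = E3 C s m.
  have -> : d0 * d1 * d2 = ((d0 + d1 + d2) ^+ 3 - 3%:R * (d0 + d1 + d2) * (d0 ^+ 2 + d1 ^+ 2 + d2 ^+ 2)
     + 2%:R * (d0 ^+ 3 + d1 ^+ 3 + d2 ^+ 3)) / 6%:R by field.
  by rewrite p1 p2 p3; field.
have E3E : E3 C s m = s ^+ 2 * (8%:R * s * Fp C m - 3%:R / 2%:R * (2%:R - Phip C m)).
  by rewrite /E3 hN; field.
have e2ge : (0 <= 4%:R^-1 - 6%:R * s ^+ 2) = (s ^+ 2 <= 24%:R^-1).
  rewrite (_ : 4%:R^-1 - 6%:R * s ^+ 2 = 6%:R * (24%:R^-1 - s ^+ 2)); last by field.
  by rewrite pmulr_rge0 ?ltr0n // subr_ge0.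
have E3iff : E3 C s m = 0 <-> (s = 0 \/ Fp C m = 3%:R / (16%:R * s) * (2%:R - Phip C m)).
  rewrite E3E; split.
  - move/eqP; rewrite mulf_eq0 expf_eq0 /= => /orP[/eqP -> | /eqP h]; first by left.
    have [->|sn0] := eqVneq s 0; first by left.
    right; apply: (mulfI (_ : 8%:R * s != 0)); first by rewrite mulf_neq0 // pnatr_eq0.
    move/eqP: h; rewrite subr_eq0 => /eqP ->; field.
    by rewrite sn0.
  - case=> [->|->]; first by rewrite expr0n mul0r.
    have [->|sn0] := eqVneq s 0; first by rewrite expr0n mul0r.
    by field.
have psd : (forall v : 'cV[C]_3, 0 <= (adjoint v *m R *m v) 0 0) <-> (s ^+ 2 <= 24%:R^-1 /\ E3 C s m = 0).
  rewrite (@psdE C R P d hPP hA) forall3 -e2ge -e2 -e3; split.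
  - case=> h0 h1 h2; split; first by rewrite !addr_ge0 ?mulr_ge0.
    apply: (@kerE C R P d hPP' hA (gv C) (gv_neq0 C) (gform C s m h7)).
    by apply/forall3.
  - case=> h2 h3; apply: R2 => //; exact: hd.
have densE : density R <-> (s ^+ 2 <= 24%:R^-1 /\ E3 C s m = 0).
  split; first by case=> _ h _; apply/psd.
  by move=> h; split => //; apply/psd.
have dens1 : density R <-> (s = 0 \/ (s ^+ 2 <= 24%:R^-1 /\ Fp C m = 3%:R / (16%:R * s) * (2%:R - Phip C m))).
  rewrite densE; split.
  - case=> h1 /E3iff [->|hF]; [by left | by right].
  - case=> [s0|[h1 hF]].
      split; first by rewrite s0 expr0n /= invr_ge0 ler0n.
      by apply/E3iff; left.
    by split => //; apply/E3iff; right.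
have s6 : sqrtC 6%:R != 0 :> C by rewrite sqrtC_eq0 pnatr_eq0.
have s6sq : ((2%:R * sqrtC 6%:R)^-1) ^+ 2 = 24%:R^-1 :> C.
  by rewrite exprVn exprMn sqrtCK -natrX -natrM.
have s6ge : 0 <= (2%:R * sqrtC 6%:R)^-1 :> C by rewrite invr_ge0 mulr_ge0 ?ler0n ?sqrtC_ge0 ?ler0n.
split => //.
split.
- case=> /dens1 hd1 /(@projE C R P d hPP hA) /forall3 [q0 q1 q2].
  have ss : s ^+ 2 = 24%:R^-1.
    have : d0 ^+ 2 + d1 ^+ 2 + d2 ^+ 2 = 1 by rewrite q0 q1 q2.
    rewrite p2 => h; apply: (mulfI (_ : 12%:R != 0 :> C)); first by rewrite pnatr_eq0.
    by apply: (addrI (2%:R^-1)); rewrite h; field.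
  have sE : s = (2%:R * sqrtC 6%:R)^-1.
    by apply/eqP; rewrite -(@eqrXn2 _ 2) // ss s6sq.
  split => //.
  case: hd1 => [s0|[_ ->]].
    by move: ss; rewrite s0 expr0n => /eqP; rewrite eq_sym invr_eq0 pnatr_eq0.
  rewrite sE; field; rewrite s6 /=.
  by [].
- case=> sE hF.
  have ss : s ^+ 2 = 24%:R^-1 by rewrite sE.
  have sn0 : s != 0 by rewrite sE invr_eq0 mulf_neq0 ?pnatr_eq0.
  have hF' : Fp C m = 3%:R / (16%:R * s) * (2%:R - Phip C m).
    by rewrite hF sE; field; rewrite s6.
  split; first by apply/dens1; right; split => //; rewrite ss.
  apply/(@projE C R P d hPP hA)/forall3.
  have := @R3 C d0 d1 d2 p1.
  rewrite e2 e3 ss (_ : 4%:R^-1 - 6%:R * 24%:R^-1 = 0 :> C); last by field.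
  have E30 : E3 C s m = 0 by apply/E3iff; right.
  by case/(_ erefl E30) => q0 q1 q2; split.
Qed.
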